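(* Let $V_0,\dots,V_{2^n}$ be the $2^n+1$ unitary operators that simultaneously diagonalize the $2^n+1$ maximally commuting subsets $S_j$ of non-identity $n$-qubit Pauli operators, i.e. $S_j = \{ s_{j,\vec a} V_j Z_{\vec a} V_j^\dagger : \vec a \in\{0,1\}^n, \vec a\neq \vec 0\}$ with signs $s_{j,\vec a}\in\{-1,1\}$. Let $\mathcal{V} = \{((2^n+1)^{-1}, V_j^\dagger)\}_{j=0}^{2^n}$ be the uniform ensemble over the adjoint unitaries. Let $\mathcal{M}$ be the measure-and-prepare channel $$\mathcal{M}(\rho) = \sum_{\vec k\in\{0,1\}^n} \mathrm{tr}\big[|\vec k\rangle\langle \vec k|\,\rho\big]\,\rho_{\vec k},\qquad \rho_{\vec k} = \sum_{\vec l\in\{0,1\}^n} \frac{1-\delta_{\vec k,\vec l}}{2^n-1}\,|\vec l\rangle\langle \vec l|,$$ which measures in the computational basis and, upon outcome $|\vec k\rangle$, prepares the uniform mixture over all computational basis states orthogonal to $|\vec k\rangle$. Then the $n$-qubit depolarizing channel with zero entanglement fidelity, $$\mathcal{D}_0(\rho) = \frac{1}{2^{2n}-1}\sum_{P\in\mathcal{Q}_n^*} P\rho P,$$ satisfies $\mathcal{D}_0 = \mathbb{E}_{\mathcal{V}}(\mathcal{M})$, where $\mathbb{E}_{\mathcal{V}}(\mathcal{M})(\rho) = \frac{1}{2^n+1}\sum_{j=0}^{2^n} V_j\,\mathcal{M}(V_j^\dagger \rho V_j)\,V_j^\dagger$. Moreover, this construction (a mixture of $2^n+1$ measure-and-prepare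 circuits) uses the minimal number of measure-and-prepare circuits required to realize $\mathcal{D}_0$ without ancilla qubits.
   Context: $\mathcal{Q}_n$ denotes the $n$-qubit Pauli operators modulo phase (a basis of operators on $n$ qubits), and $\mathcal{Q}_n^* = \mathcal{Q}_n\setminus\{I^{\otimes n}\}$. $Z_{\vec a} = \bigotimes_i Z^{a_i}$. The set $\mathcal{Q}_n^*$ is partitioned into $2^n+1$ disjoint maximally commuting subsets $S_j$, each of size $2^n-1$. For an ensemble $\mathcal{E}=\{(p_i,U_i)\}$, the $\mathcal{E}$-channel-twirl of a channel $\mathcal{C}$ is $\rho\mapsto \sum_i p_i U_i^\dagger \mathcal{C}(U_i\rho U_i^\dagger) U_i$. *)

(* Defs.v *)
From mathcomp Require Import all_boot all_order all_algebra.
From mathcomp Require Import algC.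
Set Implicit Arguments. Unset Strict Implicit. Unset Printing Implicit Defensive.
Import Order.TTheory GRing.Theory Num.Theory.
Local Open Scope ring_scope.

Definition B (n : nat) := {ffun 'I_n -> bool}.
Definition Dim (n : nat) := #|B n|.
Definition b0 {n} : B n := [ffun _ => false].
Definition xorB {n} (x y : B n) : B n := [ffun i => addb (x i) (y i)].
Definition bdot {n} (x y : B n) : nat := \sum_(i < n) (x i && y i).

(* matrices on (C^2)^{⊗n}, rows/cols indexed by bit strings via enum_val *)
Notation Mat n := ('M[algC]_(Dim n)).

Definition adj {m k} (A : 'M[algC]_(m, k)) : 'M[algC]_(k, m) := (map_mx Num.conj A)^T.
Definition unitary {m} (U : 'M[algC]_m) : Prop := U *m adj U = 1%:M.
Definition psd {m} (A : 'M[algC]_m) : Prop :=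
  A = adj A /\ forall v : 'cV[algC]_m, 0 <= (adj v *m A *m v) 0 0.
Definition density {m} (A : 'M[algC]_m) : Prop := psd A /\ \tr A = 1.

(* Hermitian Pauli operator P_{x,z} = i^{x.z} X^x Z^z = ⊗_k i^{x_k z_k} X^{x_k} Z^{z_k};
   it maps |c> to i^{x.z} (-1)^{z.c} |c xor x>. *)
Definition pauli {n} (x z : B n) : Mat n :=
  \matrix_(r, c) if enum_val r == xorB (enum_val c) x
                 then 'i ^+ (bdot x z) * (-1) ^+ (bdot z (enum_val c)) else 0.

Definition Zop {n} (a : B n) : Mat n := pauli b0 a.

Definition D0 {n} (rho : Mat n) : Mat n :=
  ((2 ^ (2 * n) - 1)%:R)^-1 *:
    \sum_(p : B n * B n | p != (b0, b0)) (pauli p.1 p.2 *m rho *m adj (pauli p.1 p.2)).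

Definition proj {n} (k : 'I_(Dim n)) : Mat n := delta_mx k k.

Definition rho_k {n} (k : 'I_(Dim n)) : Mat n :=
  \sum_(l < Dim n | l != k) ((2 ^ n - 1)%:R)^-1 *: proj l.

Definition Mchan {n} (rho : Mat n) : Mat n :=
  \sum_(k < Dim n) \tr (proj k *m rho) *: rho_k k.

Definition twirlM {n} (V : 'I_(2 ^ n + 1) -> Mat n) (rho : Mat n) : Mat n :=
  ((2 ^ n + 1)%:R)^-1 *:
    \sum_(j < 2 ^ n + 1) (V j *m Mchan (adj (V j) *m rho *m V j) *m adj (V j)).

(* a general ancilla-free measure-and-prepare circuit: apply U^dag, measure in
   the computational basis, on outcome k prepare the state sigma k *)
Definition mp_circuit {n} (U : Mat n) (sigma : 'I_(Dim n) -> Mat n) (rho : Mat n) : Mat n :=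
  \sum_(k < Dim n) \tr (proj k *m (adj U *m rho *m U)) *: sigma k.

(* Main.v *)
Require Import Defs.
From mathcomp Require Import all_boot all_order all_algebra.
From mathcomp Require Import algC.
From mathcomp Require Import ring lra.
Set Implicit Arguments. Unset Strict Implicit. Unset Printing Implicit Defensive.
Import Order.TTheory GRing.Theory Num.Theory.
Local Open Scope ring_scope.

Section Basics.
Variable n : nat.
Local Notation ev := (@enum_val (B n) _).
Local Notation er := (@enum_rank (B n)).

Lemma DimE : Dim n = (2 ^ n)%N.
Proof. by rewrite /Dim /B card_ffun card_bool card_ord. Qed.

Lemma xorBK (x y : B n) : xorB (xorB x y) y = x.
Proof. by apply/ffunP => i; rewrite !ffunE addbK. Qed.

Lemma xorB0 (x : B n) : xorB x b0 = x.
Proof. by apply/ffunP => i; rewrite !ffunE addbF. Qed.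

Lemma xorB_eq (y w x : B n) : (y == xorB w x) = (w == xorB y x).
Proof. by apply/eqP/eqP => ->; rewrite xorBK. Qed.

Lemma xorB_inj (x : B n) : injective (xorB x).
Proof.
move=> y z H; apply/ffunP => i.
by have := congr1 (fun f : B n => f i) H; rewrite !ffunE => /addbI.
Qed.

Lemma xorB_same (x u v : B n) : (xorB u x == xorB v x) = (u == v).
Proof.
apply/eqP/eqP => [H|-> //].
by rewrite -(xorBK u x) H xorBK.
Qed.

Lemma bdotC (x y : B n) : bdot x y = bdot y x.
Proof. by rewrite /bdot; apply: eq_bigr => i _; rewrite andbC. Qed.

Lemma bdot0l (y : B n) : bdot b0 y = 0%N.
Proof. by rewrite /bdot big1 // => i _; rewrite ffunE. Qed.

Lemma sgn_prod (z w : B n) :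
  (-1) ^+ (bdot z w) = \prod_(i < n) (-1 : algC) ^+ (z i && w i).
Proof. by rewrite /bdot expr_sum. Qed.

Lemma sgn_add (z u v : B n) :
  (-1 : algC) ^+ (bdot z u + bdot z v) = (-1) ^+ (bdot z (xorB u v)).
Proof.
rewrite exprD !sgn_prod -big_split /=; apply: eq_bigr => i _.
rewrite ffunE.
by case: (z i); case: (u i); case: (v i); rewrite /= ?expr0 ?expr1 ?mulr1 ?mul1r ?mulrNN ?mulr1.
Qed.

Lemma char_sum (w : B n) :
  \sum_(z : B n) (-1 : algC) ^+ (bdot z w) = if w == b0 then (Dim n)%:R else 0.
Proof.
transitivity (\prod_(i < n) \sum_(b : bool) (-1 : algC) ^+ (b && w i)).
  rewrite bigA_distr_bigA /=; apply: eq_bigr => z _; exact: sgn_prod.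
have E i : \sum_(b : bool) (-1 : algC) ^+ (b && w i) = if w i then 0 else 2.
  rewrite big_bool /=; case: (w i); rewrite /= ?expr0 ?expr1 ?addNr ?addrN //.
under eq_bigr do rewrite E.
case: eqP => [->|/eqP hw].
  rewrite DimE natrX; under eq_bigr do rewrite ffunE /=.
  by rewrite prodr_const card_ord.
have [i hi] : exists i, w i.
  apply/existsP; apply: contraR hw => /existsPn H.
  by apply/eqP/ffunP => i; rewrite ffunE; apply/negbTE/H.
by rewrite (bigD1 i) //= hi mul0r.
Qed.

End Basics.
Section Pauli.
Variable n : nat.
Local Notation ev := (@enum_val (B n) _).
Local Notation er := (@enum_rank (B n)).

Lemma sum_single (F : 'I_(Dim n) -> algC) (r : 'I_(Dim n)) (x : B n) :
  \sum_a (if ev r == xorB (ev a) x then F a else 0) = F (er (xorB (ev r) x)).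
Proof.
rewrite -big_mkcond (big_pred1 (er (xorB (ev r) x))) // => a /=.
by rewrite xorB_eq -(inj_eq enum_val_inj) enum_rankK.
Qed.

Lemma conj_sgn k : ((-1 : algC) ^+ k)^* = (-1) ^+ k.
Proof. by rewrite rmorphXn rmorphN1. Qed.

Lemma conjM' (a b : algC) : (a * b)^* = a^* * b^*.
Proof. exact: rmorphM. Qed.

Lemma i_norm k : ('i : algC) ^+ k * ('i ^+ k)^* = 1.
Proof.
by rewrite -normCK normrX normCi !expr1n.
Qed.

Lemma sandwich (x z : B n) (A : Mat n) r c :
  (pauli x z *m A *m adj (pauli x z)) r c =
  (-1) ^+ (bdot z (xorB (ev r) x) + bdot z (xorB (ev c) x)) *
    A (er (xorB (ev r) x)) (er (xorB (ev c) x)).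
Proof.
have L1 b : (pauli x z *m A) r b = 'i ^+ (bdot x z) * (-1) ^+ (bdot z (xorB (ev r) x))
    * A (er (xorB (ev r) x)) b.
  rewrite mxE; under eq_bigr do rewrite mxE.
  rewrite (eq_bigr (fun a => if ev r == xorB (ev a) x then
     ('i ^+ (bdot x z) * (-1) ^+ (bdot z (ev a))) * A a b else 0)); last first.
    by move=> a _; case: ifP; rewrite ?mul0r.
  by rewrite sum_single enum_rankK.
rewrite mxE.
rewrite (eq_bigr (fun b => if ev c == xorB (ev b) x then
   ('i ^+ (bdot x z) * (-1) ^+ (bdot z (xorB (ev r) x)) * A (er (xorB (ev r) x)) b) *
   ('i ^+ (bdot x z) * (-1) ^+ (bdot z (ev b)))^* else 0)); last first.
  move=> b _; rewrite L1 /adj !mxE; case: ifP => _ //.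
  by rewrite rmorph0 mulr0.
rewrite sum_single enum_rankK conjM' conj_sgn exprD.
set I := 'i ^+ _; set s1 := (-1) ^+ _; set s2 := (-1) ^+ _; set a := A _ _.
have := i_norm (bdot x z); rewrite -/I => HI.
transitivity ((I * I^*) * (s1 * s2 * a)); last by rewrite HI mul1r.
ring.
Qed.

End Pauli.
Section Compl.
Variable n : nat.
Local Notation ev := (@enum_val (B n) _).
Local Notation er := (@enum_rank (B n)).
Local Notation d := ((Dim n)%:R : algC).

Lemma pauli00 : pauli b0 b0 = 1%:M :> Mat n.
Proof.
apply/matrixP => r c; rewrite !mxE xorB0 bdot0l expr0 mul1r (inj_eq enum_val_inj).
by rewrite bdot0l expr0; case: eqP.
Qed.

Lemma xorB_eq0 (u v : B n) : (xorB u v == b0) = (u == v).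
Proof.
apply/eqP/eqP => [H|->]; last by apply/ffunP => i; rewrite !ffunE addbb.
apply/ffunP => i; have := congr1 (fun f : B n => f i) H; rewrite !ffunE.
by case: (u i); case: (v i).
Qed.

Lemma sum_er (G : 'I_(Dim n) -> algC) : \sum_(y : B n) G (er y) = \sum_k G k.
Proof. by rewrite (reindex er) //; apply: onW_bij; exact: enum_rank_bij. Qed.

Lemma sum_sandwich_z (x : B n) (A : Mat n) r c :
  \sum_(z : B n) (pauli x z *m A *m adj (pauli x z)) r c =
  (r == c)%:R * d * A (er (xorB (ev r) x)) (er (xorB (ev r) x)).
Proof.
under eq_bigr do rewrite sandwich sgn_add.
rewrite -mulr_suml char_sum xorB_eq0 xorB_same (inj_eq enum_val_inj).
by case: eqP => [->|_]; rewrite ?mul1r ?mul0r.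
Qed.

Lemma pauli_complete (A : Mat n) :
  \sum_(p : B n * B n) (pauli p.1 p.2 *m A *m adj (pauli p.1 p.2)) =
  (d * \tr A) *: 1%:M.
Proof.
apply/matrixP => r c; rewrite summxE.
rewrite -(pair_big predT predT (fun x z => (pauli x z *m A *m adj (pauli x z)) r c)) /=.
under eq_bigr do rewrite sum_sandwich_z.
rewrite !mxE -mulr_sumr.
have -> : \sum_(x : B n) A (er (xorB (ev r) x)) (er (xorB (ev r) x)) = \tr A.
  by rewrite /mxtrace -(sum_er (fun k => A k k)) [RHS](reindex_inj (@xorB_inj n (ev r))).
by ring.
Qed.

Lemma tr_proj (A : Mat n) k : \tr (proj k *m A) = A k k.
Proof.
rewrite /mxtrace (bigD1 k) //= big1 ?addr0 => [|i hi].
  rewrite mxE (bigD1 k) //= big1 ?addr0 => [|j hj]; first by rewrite mxE !eqxx mul1r.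
  by rewrite mxE (negbTE hj) andbF mul0r.
by rewrite mxE big1 // => j _; rewrite mxE (negbTE hi) mul0r.
Qed.

Lemma sum_delta (F : 'I_(Dim n) -> algC) r c :
  \sum_k F k * (proj k : Mat n) r c = (r == c)%:R * F r.
Proof.
rewrite (bigD1 r) //= big1 ?addr0 => [|k hk].
  by rewrite mxE eqxx /= eq_sym mulrC.
by rewrite mxE eq_sym (negbTE hk) mulr0.
Qed.

Lemma rho_kE k r c :
  (rho_k k : Mat n) r c = (r == c)%:R * (if r != k then ((2 ^ n - 1)%:R)^-1 else 0).
Proof.
rewrite /rho_k summxE big_mkcond /=.
rewrite (eq_bigr (fun l => (if l != k then ((2 ^ n - 1)%:R)^-1 else 0) * (proj l : Mat n) r c)).
  by rewrite sum_delta.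
by move=> l _; case: ifP; rewrite ?mxE ?mul0r.
Qed.

Lemma MchanE (S : Mat n) :
  Mchan S = ((2 ^ n - 1)%:R)^-1 *:
    (\tr S *: 1%:M - d^-1 *: \sum_(a : B n) (Zop a *m S *m adj (Zop a))).
Proof.
have d0 : d != 0 by rewrite DimE pnatr_eq0 expn_eq0.
apply/matrixP => r c; rewrite /Mchan summxE !mxE summxE.
under eq_bigr do rewrite mxE tr_proj rho_kE.
under [X in _ = _ * (_ - _ * X)]eq_bigr do rewrite sandwich sgn_add !xorB0 !enum_valK.
rewrite -mulr_suml char_sum xorB_eq0 (inj_eq enum_val_inj).
case: (eqVneq r c) => [<-|hrc]; last first.
  by rewrite big1 => [|k _]; rewrite ?mul0r ?mulr0 ?subr0 ?mulr0.
rewrite /= mulr1 mulKf //.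
under eq_bigr do rewrite mul1r.
rewrite /mxtrace (bigD1 r) //= eqxx mulr0 add0r.
rewrite [in RHS](bigD1 r) //= addrAC subrr add0r mulr_sumr.
by apply: eq_bigr => k hk; rewrite eq_sym hk mulrC.
Qed.

End Compl.
Section Adj.
Variable m : nat.
Lemma adjM (A B : 'M[algC]_m) : adj (A *m B) = adj B *m adj A.
Proof. by rewrite /adj map_mxM trmx_mul. Qed.
Lemma adjZ (a : algC) (A : 'M[algC]_m) : adj (a *: A) = a^* *: adj A.
Proof. by rewrite /adj map_mxZ linearZ. Qed.
Lemma adj1 : adj (1%:M : 'M[algC]_m) = 1%:M.
Proof. by rewrite /adj map_scalar_mx rmorph1 tr_scalar_mx. Qed.
Lemma tr_conj (V A : 'M[algC]_m) : unitary V -> \tr (adj V *m A *m V) = \tr A.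
Proof. by move=> hV; rewrite mxtrace_mulC mulmxA hV mul1mx. Qed.
End Adj.
From mathcomp Require Import zify.

Lemma adjK m (A : 'M[algC]_m) : adj (adj A) = A.
Proof. by apply/matrixP => i j; rewrite !mxE conjCK. Qed.

Lemma twirl_term n (V : Mat n) (hV : unitary V) (rho : Mat n) :
  V *m Mchan (adj V *m rho *m V) *m adj V =
  ((2 ^ n - 1)%:R)^-1 *: (\tr rho *: 1%:M - (Dim n)%:R^-1 *:
     \sum_(a : B n) ((V *m Zop a *m adj V) *m rho *m adj (V *m Zop a *m adj V))).
Proof.
rewrite MchanE tr_conj //.
rewrite -scalemxAr -scalemxAl; congr (_ *: _).
rewrite mulmxBr mulmxBl -!scalemxAr -!scalemxAl mulmx1 hV; congr (_ - _ *: _).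
rewrite mulmx_sumr mulmx_suml; apply: eq_bigr => a _.
by rewrite !adjM adjK !mulmxA.
Qed.

Lemma nat_id n : (2 ^ (2 * n) - 1 = (2 ^ n - 1) * (2 ^ n + 1))%N.
Proof.
rewrite [(2 * n)%N]mulnC expnM.
have : (0 < 2 ^ n)%N by rewrite expn_gt0.
move: (2 ^ n)%N => x hx; nia.
Qed.

Lemma part1 (n : nat)
  (V : 'I_(2 ^ n + 1) -> Mat n)
  (f : 'I_(2 ^ n + 1) -> B n -> B n * B n)
  (s : 'I_(2 ^ n + 1) -> B n -> algC)
  (hV : forall j, unitary (V j))
  (hs : forall j a, s j a = 1 \/ s j a = -1)
  (hdiag : forall j (a : B n), a != b0 ->
     V j *m Zop a *m adj (V j) = s j a *: pauli (f j a).1 (f j a).2)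
  (hinj : forall j a j' a', a != b0 -> a' != b0 -> f j a = f j' a' ->
     j = j' /\ a = a')
  (hsurj : forall p : B n * B n, p != (b0, b0) ->
     exists j a, a != b0 /\ f j a = p) :
  (forall rho : Mat n, D0 rho = twirlM V rho).
Proof.
have d0 : (Dim n)%:R != 0 :> algC by rewrite DimE pnatr_eq0 expn_eq0.
have fnz j a : a != b0 -> f j a != (b0, b0).
  move=> ha; apply/eqP => hf.
  have := hdiag j a ha; rewrite hf /= pauli00 => H.
  have := congr1 mxtrace H; rewrite mxtrace_mulC mulmxA (mulmx1C (hV j)) mul1mx.
  rewrite mxtraceZ mxtrace1 /mxtrace -sum_er.
  under eq_bigr do rewrite mxE enum_rankK xorB0 eqxx bdot0l expr0 mul1r bdotC.
  rewrite char_sum (negbTE ha) => /esym/eqP; rewrite mulf_eq0 (negbTE d0) orbF.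
  by case: (hs j a) => ->; rewrite ?oppr_eq0 oner_eq0.
have sum_a j rho : \sum_(a : B n) ((V j *m Zop a *m adj (V j)) *m rho *m adj (V j *m Zop a *m adj (V j)))
   = rho + \sum_(a | a != b0) (pauli (f j a).1 (f j a).2 *m rho *m adj (pauli (f j a).1 (f j a).2)).
  rewrite (bigD1 b0) //= /Zop pauli00 mulmx1 (hV j) mul1mx adj1 mulmx1; congr (_ + _).
  apply: eq_bigr => a ha; rewrite /Zop in hdiag; rewrite hdiag // adjZ.
  rewrite -!scalemxAl -scalemxAr scalerA.
  by case: (hs j a) => ->; rewrite ?rmorph1 ?rmorphN1 ?mulr1 ?mulrNN ?mulr1 scale1r.
have reidx (g : B n * B n -> Mat n) :
    \sum_j \sum_(a | a != b0) g (f j a) = \sum_(p | p != (b0, b0)) g p.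
  rewrite pair_big_dep /=.
  rewrite (partition_big (fun q => f q.1 q.2) (fun p => p != (b0, b0))) /=; last first.
    by move=> [j a] /= ha; exact: fnz.
  apply: eq_bigr => p hp; have [j [a [ha hfa]]] := hsurj p hp.
  rewrite (big_pred1 (j, a)) /= ?hfa // => -[j' a'] /=.
  apply/idP/eqP => [/andP[ha' /eqP e]|[-> ->]]; last by rewrite ha hfa eqxx.
  by have [-> ->] := hinj _ _ _ _ ha' ha (etrans e (esym hfa)).
move=> rho.
set S := \sum_(p | p != (b0, b0)) (pauli p.1 p.2 *m rho *m adj (pauli p.1 p.2)).
have HS : S = ((Dim n)%:R * \tr rho) *: 1%:M - rho.
  apply/eqP; rewrite eq_sym subr_eq addrC -pauli_complete (bigD1 (b0, b0)) //=.
  by rewrite pauli00 mul1mx adj1 mulmx1.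
rewrite /twirlM /D0 -/S.
under eq_bigr do rewrite twirl_term // sum_a.
rewrite -scaler_sumr sumrB -scaler_sumr -scaler_sumr big_split /= !sumr_const card_ord.
rewrite (reidx (fun p => pauli p.1 p.2 *m rho *m adj (pauli p.1 p.2))) -/S HS.
have Hm (a : algC) : a *+ (2 ^ n + 1) = a * ((2 ^ n)%:R + 1).
  by rewrite mulrDr mulr1 mulr_natr mulrnDr mulr1n.
apply/matrixP => r c; rewrite !mxE !mulmxnE mxE !Hm.
rewrite nat_id natrM invfM !mul1r.
set e := ((2 ^ n - 1)%:R)^-1.
have hx : (2 ^ n)%:R != 0 :> algC by rewrite pnatr_eq0 expn_eq0.
have hx1 : (2 ^ n)%:R + 1 != 0 :> algC by rewrite -(natrD _ (2 ^ n)%N 1%N) pnatr_eq0 addn1.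
move: (\tr rho) ((r == c)%:R) (rho r c) e => t dl y e'.
rewrite DimE.
rewrite (_ : (2 ^ n + 1)%:R = (2 ^ n)%:R + 1 :> algC); last by rewrite natrD.
move: ((2 ^ n)%:R : algC) hx hx1 => x hx hx1.
field.
by rewrite hx1 hx.
Qed.
Lemma ker_exists (d : nat) (T : finType) (K : T -> 'M[algC]_d) :
  (#|T| < d * d)%N -> exists2 rho : 'M[algC]_d, rho != 0 & forall t, \tr (K t *m rho) = 0.
Proof.
move=> hT.
pose G : 'M[algC]_(d * d, #|T|) :=
  \matrix_(r, t) \tr (K (enum_val t) *m vec_mx (delta_mx 0 r)).
have hk : kermx G != 0.
  rewrite -mxrank_eq0 mxrank_ker; have := rank_leq_col G; lia.
have [i hi] : exists i, row i (kermx G) != 0.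
  case: (pickP (fun i => row i (kermx G) != 0)) => [i hi|H]; first by exists i.
  move: hk; have -> : kermx G = 0; last by rewrite eqxx.
  by apply/row_matrixP => i; move: (H i) => /negbFE/eqP ->; rewrite row0.
set v := row i (kermx G).
have hv : v *m G = 0 by rewrite /v -row_mul mulmx_ker row0.
exists (vec_mx v).
  apply: contra hi => /eqP h; apply/eqP.
  by rewrite -/v -(vec_mxK v) h linear0.
move=> t.
have := congr1 (fun M : 'M[algC]_(1, #|T|) => M ord0 (enum_rank t)) hv; rewrite [LHS]mxE [RHS]mxE => <-.
under eq_bigr do rewrite [G _ _]mxE enum_rankK.
rewrite {1}(matrix_sum_delta v) big_ord1 linear_sum mulmx_sumr raddf_sum.
by apply: eq_bigr => r _; rewrite linearZ /= -scalemxAr mxtraceZ.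
Qed.
Lemma D0E n (rho : Mat n) :
  D0 rho = ((2 ^ (2 * n) - 1)%:R)^-1 *: (((Dim n)%:R * \tr rho) *: 1%:M - rho).
Proof.
rewrite /D0; congr (_ *: _); apply/eqP.
rewrite eq_sym subr_eq addrC -pauli_complete (bigD1 (b0, b0)) //=.
by rewrite pauli00 mul1mx adj1 mulmx1.
Qed.

Lemma tr_mp n (U : Mat n) sigma (rho : Mat n) :
  unitary U -> (forall k, \tr (sigma k) = 1) ->
  \tr (mp_circuit U sigma rho) = \tr rho.
Proof.
move=> hU hs; rewrite /mp_circuit raddf_sum /=.
under eq_bigr do rewrite mxtraceZ hs mulr1 tr_proj.
by rewrite -[RHS](tr_conj _ hU).
Qed.

Lemma part2 (n : nat) (m : nat) (p : 'I_m -> algC) (U : 'I_m -> Mat n)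
          (sigma : 'I_m -> 'I_(Dim n) -> Mat n) :
     (forall i, 0 < p i) -> \sum_(i < m) p i = 1 ->
     (forall i, unitary (U i)) -> (forall i k, density (sigma i k)) ->
     (forall rho : Mat n, D0 rho = \sum_(i < m) p i *: mp_circuit (U i) (sigma i) rho) ->
     (2 ^ n + 1 <= m)%N.
Proof.
move=> hp hsum hU hsig hD.
case: n U sigma hU hsig hD => [|n] U sigma hU hsig hD.
  exfalso.
  have E i : \tr (p i *: mp_circuit (U i) (sigma i) 1%:M) = p i * \tr (1%:M : Mat 0).
    by rewrite mxtraceZ tr_mp // => k; case: (hsig i k).
  have := congr1 mxtrace (hD 1%:M).
  rewrite D0E /= mxtraceZ invr0 mul0r raddf_sum /=.
  under eq_bigr do rewrite E.
  rewrite -mulr_suml hsum mul1r mxtrace1 /Dim /B card_ffun card_ord expn0.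
  by move/eqP; rewrite eq_sym oner_eq0.
rewrite leqNgt; apply/negP => hm.
set dd := Dim n.+1.
have hdd : dd = (2 ^ n.+1)%N by rewrite /dd DimE.
have hdd2 : (2 <= dd)%N by rewrite hdd expnS; have := expn_gt0 2 n; lia.
pose K (t : option ('I_m * 'I_dd.-1)) : Mat n.+1 :=
  if t is Some (i, k) then U i *m proj (widen_ord (leq_pred dd) k) *m adj (U i) else 1%:M.
have hT : (#|{: option ('I_m * 'I_dd.-1)}| < dd * dd)%N.
  rewrite card_option card_prod !card_ord.
  have hm' : (m <= dd)%N by rewrite hdd; lia.
  have : (dd.-1 = dd - 1)%N by lia.
  move=> ->; nia.
have [rho rho0 hrho] := ker_exists K hT.
have tr0 : \tr rho = 0 by have := hrho None; rewrite /K mul1mx.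
have fk i (k : 'I_dd) : (adj (U i) *m rho *m U i) k k = 0.
  have gen (k' : 'I_dd) : (k' < dd.-1)%N -> (adj (U i) *m rho *m U i) k' k' = 0.
    move=> hk'; have := hrho (Some (i, Ordinal hk')); rewrite /K.
    rewrite -tr_proj => <-.
    have -> : widen_ord (leq_pred dd) (Ordinal hk') = k' by apply: val_inj.
    transitivity (\tr ((proj k' *m adj (U i) *m rho) *m U i)); first by rewrite !mulmxA.
    by rewrite mxtrace_mulC !mulmxA.
  case: (ltnP k dd.-1) => hk; first exact: gen.
  have := tr_conj rho (hU i); rewrite tr0 /mxtrace (bigD1 k) //= big1 ?addr0 // => k' hk'.
  apply: gen; have := ltn_ord k'; have := ltn_ord k.
  have hne : (k' : nat) <> k by move=> e; move/eqP: hk'; apply; exact: val_inj.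
  lia.
have : D0 rho = 0.
  rewrite hD big1 // => i _; rewrite /mp_circuit big1 ?scaler0 // => k _.
  by rewrite tr_proj fk scale0r.
rewrite D0E tr0 mulr0 scale0r sub0r scalerN => /eqP; rewrite oppr_eq0 scaler_eq0.
rewrite (negbTE rho0) orbF invr_eq0 pnatr_eq0.
have : (4 <= 2 ^ (2 * n.+1))%N.
  by rewrite mulnS expnD (_ : 4 = 2 ^ 2)%N // leq_pmulr // expn_gt0.
lia.
Qed.

Theorem lemma1 (n : nat)
  (V : 'I_(2 ^ n + 1) -> Mat n)
  (f : 'I_(2 ^ n + 1) -> B n -> B n * B n)
  (s : 'I_(2 ^ n + 1) -> B n -> algC)
  (hV : forall j, unitary (V j))
  (hs : forall j a, s j a = 1 \/ s j a = -1)
  (hdiag : forall j (a : B n), a != b0 ->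
     V j *m Zop a *m adj (V j) = s j a *: pauli (f j a).1 (f j a).2)
  (hinj : forall j a j' a', a != b0 -> a' != b0 -> f j a = f j' a' ->
     j = j' /\ a = a')
  (hsurj : forall p : B n * B n, p != (b0, b0) ->
     exists j a, a != b0 /\ f j a = p) :
  (forall rho : Mat n, D0 rho = twirlM V rho) /\
  (forall (m : nat) (p : 'I_m -> algC) (U : 'I_m -> Mat n)
          (sigma : 'I_m -> 'I_(Dim n) -> Mat n),
     (forall i, 0 < p i) -> \sum_(i < m) p i = 1 ->
     (forall i, unitary (U i)) -> (forall i k, density (sigma i k)) ->
     (forall rho : Mat n, D0 rho = \sum_(i < m) p i *: mp_circuit (U i) (sigma i) rho) ->
     (2 ^ n + 1 <= m)%N).
Proof.
split; first exact: (part1 hV hs hdiag hinj hsurj).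
exact: part2.
Qed.
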